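(* Let $v\in\mathrm{Box}(\Sigma_+)$, $t\in\mathcal I(y^v)$, and let $l\in\mathbb L$ be such that $p(l)\in p(\mathcal S^{es}_+(\gamma^v))=p(\mathcal S^{es}_-(\gamma^v(t)))$, where $p:\mathbb L\to\mathbb L/\langle h\rangle$ is the projection. Then for $m\in\mathbb Z$: $mh+l\in\mathcal S^{es}_+(\gamma^v)$ if and only if $m\ge m_+(l)$, and $mh+l\in\mathcal S^{es}_-(\gamma^v(t))$ if and only if $m\le m_{-,t}(l)$.
   Context: $N\cong\mathbb Z^d$ lattice, $\mathcal A=\{v_1,\dots,v_n\}\subset N$ generating $N$ with a homomorphism $\mathrm h:N\to\mathbb Z$, $\mathrm h(v_j)=1$; $\mathbb L=\{l\in\mathbb Z^n:\sum l_jv_j=0\}$; fix $\beta\in N$. $\Sigma_\pm$ are the fans supported on $\mathbb R_{\ge0}\mathrm{Conv}(\mathcal A)$ of two regular triangulations with vertices in $\mathcal A$ joined by an edge of the secondary polytope; there is a circuit $I$ with primitive relation $h\in\mathbb L$, $I_\pm=\{v_j:\pm h_j>0\}$, such that (with $\mathcal F\subset\mathcal A\setminus I$ separating if $\mathcal F\cup(I\setminus\{v\})$ generates a maximal cone of $\Sigma_\pm$ for all $v\in I_\pm$) $\Sigma_-$ arises from $\Sigma_+$ by replacing the maximal cones $\mathcal F\cup(I\setminus\{v\})$, $v\in I_+$, by $\mathcal F\cup(I\setminus\{v\})$, $v\in I_-$; these are the essential maximal cones of $\Sigma_\pm$. $\mathrm{Box}(\Sigma_+)$: $v=\sum q^v_jv_j\in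 N$, $0\le q^v_j<1$, $q^v_j=0$ unless $v_j$ spans a ray of a fixed maximal cone of $\Sigma_+$; $y^v_j=e^{2\pi iq^v_j}$. $\mathcal I(r)=\{t\in\mathbb C^*:r_jt^{h_j}=1$ for some $v_j\in I_-\}$. Choose $\gamma^v\in\mathbb Q^n$ with $e^{2\pi i\gamma^v_j}=y^v_j$, $\sum\gamma^v_jv_j=\beta$; for $t\in\mathcal I(y^v)$ fix $\theta_t\in\mathbb Q$ with $e^{2\pi i\theta_t}=t$ ($\theta_1=0$) and set $\gamma^v(t)=\gamma^v+\theta_th$. For $\gamma\in\mathbb Q^n$, $l\in\mathbb L$: $\mathrm{Supp}(l)=\{v_j:l_j+\gamma_j\notin\mathbb Z_{\ge0}\}$; $\mathcal S^{es}_\pm(\gamma)$ is the set of $l\in\mathbb L$ such that all elements of $\mathrm{Supp}(l)$ generate rays of one essential maximal cone of $\Sigma_\pm$. Define $m_+(l)=\min\{m\in\mathbb Z:mh_j+l_j+\gamma^v_j\in\mathbb Z_{\ge0}$ for some $j$ with $v_j\in I_+\}$ and $m_{-,t}(l)=\max\{m\in\mathbb Z:mh_j+l_j+\gamma^v_j(t)\in\mathbb Z_{\ge0}$ for some $j$ with $v_j\in I_-\}$ (these are well defined integers). *)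

(* Defs.v *)
From mathcomp Require Import all_boot all_order all_algebra.
Set Implicit Arguments. Unset Strict Implicit. Unset Printing Implicit Defensive.
Import Order.TTheory GRing.Theory Num.Theory.
Local Open Scope ring_scope.

(* The point configuration A = {v_1,...,v_n} in N = Z^d is encoded as
   v : 'I_n -> 'I_d -> int  (v j = the j-th vector, v j i its i-th coordinate).
   Cones of the fans are encoded by the index sets of their generators. *)
Section Defs.
Variables (d n : nat) (v : 'I_n -> 'I_d -> int).

Definition pairing (j : 'I_n) (psi : 'I_d -> rat) : rat :=
  \sum_(i < d) (v j i)%:~R * psi i.

Definition combQ (c : 'I_n -> rat) (i : 'I_d) : rat :=
  \sum_(j < n) c j * (v j i)%:~R.

Definition generates_lattice : Prop :=
  forall x : 'I_d -> int, exists c : 'I_n -> int,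
    forall i, x i = \sum_(j < n) c j * v j i.

Definition has_height_one : Prop :=
  exists w : 'I_d -> int, forall j, \sum_(i < d) v j i * w i = 1.

Definition in_L (l : 'I_n -> int) : Prop :=
  forall i : 'I_d, \sum_(j < n) l j * v j i = 0.

Definition lin_indep (S : {set 'I_n}) : Prop :=
  forall c : 'I_n -> rat, (forall j, j \notin S -> c j = 0) ->
    (forall i, combQ c i = 0) -> forall j, c j = 0.

(* Sigma (given by its maximal cones) is the fan over a regular triangulation
   of Conv(A) with vertices in A: there is a height function omega such that
   every lower face of the lifted configuration is a simplex, and the maximal
   cells are exactly the lower facets. *)
Definition regular_triangulation_fan (Sigma : {set {set 'I_n}}) : Prop :=
  exists omega : 'I_n -> rat,
    (forall psi : 'I_d -> rat, (forall j, pairing j psi <= omega j) ->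
        lin_indep [set j | pairing j psi == omega j]) /\
    (forall sigma : {set 'I_n}, sigma \in Sigma <->
        (#|sigma| = d /\
         exists psi : 'I_d -> rat, (forall j, pairing j psi <= omega j) /\
             sigma = [set j | pairing j psi == omega j])).

Definition is_circuit (I : {set 'I_n}) : Prop :=
  ~ lin_indep I /\ forall j, j \in I -> lin_indep (I :\ j).

Definition primitive_relation (I : {set 'I_n}) (h : 'I_n -> int) : Prop :=
  [/\ in_L h, (forall j, (h j != 0) = (j \in I)) &
      (forall (k : int) (h' : 'I_n -> int), (forall j, h j = k * h' j) -> `|k| = 1)].

Definition Ipos (h : 'I_n -> int) : {set 'I_n} := [set j | 0 < h j].
Definition Ineg (h : 'I_n -> int) : {set 'I_n} := [set j | h j < 0].

Definition separating (Sigmap : {set {set 'I_n}}) (I : {set 'I_n})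
    (h : 'I_n -> int) (F : {set 'I_n}) : Prop :=
  F :&: I = set0 /\ forall k, k \in Ipos h -> F :|: (I :\ k) \in Sigmap.

(* essential maximal cones: F u (I \ {v}), F separating, v in P
   (P = I_+ for Sigma_+, P = I_- for Sigma_-) *)
Definition essential (Sigmap : {set {set 'I_n}}) (I : {set 'I_n})
    (h : 'I_n -> int) (P : {set 'I_n}) (sigma : {set 'I_n}) : Prop :=
  exists F k, [/\ separating Sigmap I h F, k \in P & sigma = F :|: (I :\ k)].

Definition flip (Sigmap Sigmam : {set {set 'I_n}}) (I : {set 'I_n})
    (h : 'I_n -> int) : Prop :=
  forall sigma, sigma \in Sigmam <->
    ((sigma \in Sigmap /\ ~ essential Sigmap I h (Ipos h) sigma)
     \/ essential Sigmap I h (Ineg h) sigma).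

Definition Supp (gamma : 'I_n -> rat) (l : 'I_n -> int) : {set 'I_n} :=
  [set j | ~~ ((l j)%:~R + gamma j \is a Num.nat)].

Definition S_es (ess : {set 'I_n} -> Prop) (gamma : 'I_n -> rat)
    (l : 'I_n -> int) : Prop :=
  in_L l /\ exists sigma, ess sigma /\ Supp gamma l \subset sigma.

(* Box(Sigma_+), parametrised by the coefficient vector q = q^v:
   v = sum q_j v_j in N, 0 <= q_j < 1, q supported on a maximal cone. *)
Definition in_box (Sigmap : {set {set 'I_n}}) (q : 'I_n -> rat) : Prop :=
  [/\ forall j, 0 <= q j < 1,
      exists2 sigma, sigma \in Sigmap & forall j, j \notin sigma -> q j = 0 &
      forall i, combQ q i \is a Num.int].

End Defs.

Definition shift {n : nat} (m : int) (h l : 'I_n -> int) : 'I_n -> int :=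
  fun j => m * h j + l j.

Definition is_least (P : int -> Prop) (m : int) : Prop :=
  P m /\ forall m', P m' -> (m <= m')%R.
Definition is_greatest (P : int -> Prop) (m : int) : Prop :=
  P m /\ forall m', P m' -> (m' <= m)%R.

(* Main.v *)
Require Import Defs.
From mathcomp Require Import all_boot all_order all_algebra.
From mathcomp Require Import zify ring lra.
Import Order.TTheory GRing.Theory Num.Theory.
Local Open Scope ring_scope.

Lemma least_int (P : pred int) (b m0 : int) : P m0 -> (forall m, P m -> b <= m) ->
  exists mp, P mp /\ forall m, P m -> mp <= m.
Proof.
move=> Pm0 lb.
have ex : exists k : nat, P (b + k%:Z).
  exists `|m0 - b|%N.
  have -> : b + (`|m0 - b|%N)%:Z = m0 by have := lb _ Pm0; lia.
  done.
case: (ex_minnP ex) => k Pk mink; exists (b + k%:Z); split => // m Pm.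
have := mink `|m - b|%N.
have -> : b + (`|m - b|%N)%:Z = m by have := lb _ Pm; lia.
move=> /(_ Pm) H; have := lb _ Pm; lia.
Qed.

Lemma gen_least (n : nat) (P : {set 'I_n}) (a : 'I_n -> int) (c : 'I_n -> rat) :
  (forall j, j \in P -> 0 < a j) ->
  (exists m0, exists2 j, j \in P & (m0 * a j)%:~R + c j \is a Num.nat) ->
  exists mp, is_least (fun m => exists2 j, j \in P & (m * a j)%:~R + c j \is a Num.nat) mp
    /\ forall m, (exists2 j, j \in P & (m * a j)%:~R + c j \is a Num.nat) <-> mp <= m.
Proof.
move=> apos [m0 ex0].
pose Q := fun m : int => [exists j, (j \in P) && ((m * a j)%:~R + c j \is a Num.nat)].
have QP : forall m, Q m <-> exists2 j, j \in P & (m * a j)%:~R + c j \is a Num.nat.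
  move=> m; split; first by move=> /existsP [j /andP [? ?]]; exists j.
  by move=> [j ? ?]; apply/existsP; exists j; apply/andP.
pose S : rat := \sum_(j < n) `|c j|.
pose B := Num.Def.archi_bound S.
have S0 : 0 <= S by apply: sumr_ge0 => j _; apply: normr_ge0.
have SB := archi_boundP S0.
have lb : forall m, Q m -> - (B%:Z) <= m.
  move=> m /QP [j jP]; rewrite natrEint => /andP [_ H].
  have aj := apos j jP.
  have cS : `|c j| <= S.
    rewrite /S (bigD1 j) //= lerDl; apply: sumr_ge0 => i _; apply: normr_ge0.
  have cjS := le_trans (ler_norm (c j)) cS.
  case: (leP 0 m) => hm; first by lia.
  have H2 : m * a j <= m by nia.
  have H3 : (m * a j)%:~R <= m%:~R :> rat by rewrite ler_int.
  have H4 : ((- (B%:Z))%:~R : rat) < m%:~R.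
    rewrite rmorphN /=. have -> : (B%:Z)%:~R = B%:R :> rat by [].
    apply: (lt_le_trans (y := - S)); first by rewrite ltrN2.
    apply: (le_trans (y := - c j)); first by rewrite lerN2.
    apply: (le_trans _ H3). by rewrite -subr_ge0 opprK.
  by move: H4; rewrite ltr_int => /ltW.
have [mp [Qmp minmp]] := @least_int Q _ m0 (proj2 (QP m0) ex0) lb.
have up : forall m, mp <= m -> Q m.
  move=> m hm; move/QP: Qmp => [j jP H]; apply/QP; exists j => //.
  have -> : (m * a j)%:~R + c j = ((mp * a j)%:~R + c j) + ((m - mp) * a j)%:~R :> rat.
    rewrite !intrM intrB; ring.
  apply: rpredD => //; rewrite natrEint intr_int /= ler0z.
  apply: mulr_ge0; first by rewrite subr_ge0.
  exact: ltW (apos j jP).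
exists mp; split.
  split; first by apply/QP.
  by move=> m' /QP; apply: minmp.
move=> m; split; first by move/QP; apply: minmp.
by move/up/QP.
Qed.

Lemma ex_nat_int (a : int) (c : rat) : 0 < a -> c \is a Num.int ->
  exists m : int, (m * a)%:~R + c \is a Num.nat.
Proof.
move=> ha /intrP [z ->]; exists `|z|%:Z.
rewrite -intrD natrEint intr_int /= ler0z; nia.
Qed.

Theorem proposition4p7
  (d n : nat) (v : 'I_n -> 'I_d -> int) (beta : 'I_d -> int)
  (Sigmap Sigmam : {set {set 'I_n}}) (I : {set 'I_n}) (h : 'I_n -> int)
  (q gamma : 'I_n -> rat) (theta : rat) (l : 'I_n -> int) :
  injective v ->
  generates_lattice v ->
  has_height_one v ->
  regular_triangulation_fan v Sigmap ->
  regular_triangulation_fan v Sigmam ->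
  is_circuit v I ->
  primitive_relation v I h ->
  flip Sigmap Sigmam I h ->
  (* v in Box(Sigma_+), with coefficients q = q^v, y^v_j = exp(2 pi i q_j) *)
  in_box v Sigmap q ->
  (* gamma = gamma^v : exp(2 pi i gamma_j) = y^v_j, sum gamma_j v_j = beta *)
  (forall j, gamma j - q j \is a Num.int) ->
  (forall i, combQ v gamma i = (beta i)%:~R) ->
  (* t = exp(2 pi i theta) lies in I(y^v); theta_1 = 0 *)
  (exists2 j, j \in Ineg h & q j + theta * (h j)%:~R \is a Num.int) ->
  (theta \is a Num.int -> theta = 0) ->
  (* l in L with p(l) in p(S^es_+(gamma^v)) *)
  in_L v l ->
  (exists k : int, S_es v (essential Sigmap I h (Ipos h)) gamma (shift k h l)) ->
  let gamma_t := fun j => gamma j + theta * (h j)%:~R in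
  (exists mp : int,
     is_least (fun m => exists2 j, j \in Ipos h &
                  (m * h j + l j)%:~R + gamma j \is a Num.nat) mp /\
     forall m : int,
       S_es v (essential Sigmap I h (Ipos h)) gamma (shift m h l) <-> mp <= m) /\
  (exists mm : int,
     is_greatest (fun m => exists2 j, j \in Ineg h &
                  (m * h j + l j)%:~R + gamma_t j \is a Num.nat) mm /\
     forall m : int,
       S_es v (essential Sigmap I h (Ineg h)) gamma_t (shift m h l) <-> m <= mm).
Proof.
move=> _ _ _ _ _ _ [hL hI _] _ _ gq _ [j0 j0n qj0] _ lL
  [k0 [_ [sig0 [[F0 [k1 [[F0I sepF0] k1p Esig]]] sub0]]]] gamma_t.
subst sig0.
have h0 : forall j, j \notin I -> h j = 0.
  by move=> j; rewrite -hI negbK => /eqP.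
have posI : forall j, j \in Ipos h -> j \in I.
  by move=> j; rewrite inE -hI => /lt0r_neq0.
have negI : forall j, j \in Ineg h -> j \in I.
  by move=> j; rewrite inE -hI => /ltr0_neq0.
have inLs : forall m, in_L v (shift m h l).
  move=> m i; rewrite /shift.
  under eq_bigr do rewrite mulrDl -mulrA.
  by rewrite big_split /= -mulr_sumr hL lL mulr0 addr0.
have A : forall j, j \notin I -> ~~ ((l j)%:~R + gamma j \is a Num.nat) -> j \in F0.
  move=> j jI nj.
  have : j \in Supp gamma (shift k0 h l) by rewrite inE /shift h0 // mulr0 add0r.
  move/(subsetP sub0); rewrite !inE (negbTE jI) andbF orbF //.
have ess_iff : forall (P : {set 'I_n}) (g : 'I_n -> rat) (m : int),
    (forall j, j \in P -> j \in I) -> (forall j, j \notin I -> g j = gamma j) ->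
    S_es v (essential Sigmap I h P) g (shift m h l) <->
    exists2 j, j \in P & (m * h j + l j)%:~R + g j \is a Num.nat.
  move=> P g m PI hg; split.
    move=> [_ [sig [[F [k [[FI _] kP ->]]] sub]]].
    exists k => //; apply: contraT => nk.
    have : k \in Supp g (shift m h l) by rewrite inE.
    move/(subsetP sub); rewrite !inE eqxx /= orbF => kF.
    have : k \in F :&: I by rewrite inE kF PI.
    by rewrite FI inE.
  move=> [k kP kn]; split; first exact: inLs.
  exists (F0 :|: (I :\ k)); split.
    by exists F0, k; split.
  apply/subsetP => j; rewrite inE /shift => nj; rewrite !inE.
  case jI: (j \in I).
    case: (eqVneq j k) => [ejk|jk]; last by rewrite orbT.
    by rewrite ejk kn in nj.
  rewrite A ?jI //.
  by move: nj; rewrite h0 ?jI // mulr0 add0r hg ?jI.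
split.
  pose c := fun j => (l j)%:~R + gamma j.
  have E : forall m j, (m * h j + l j)%:~R + gamma j = (m * h j)%:~R + c j.
    by move=> m j; rewrite /c intrD addrA.
  have apos : forall j, j \in Ipos h -> 0 < h j by move=> j; rewrite inE.
  have ex0 : exists m0, exists2 j, j \in Ipos h & (m0 * h j)%:~R + c j \is a Num.nat.
    have := proj1 (ess_iff (Ipos h) gamma k0 posI (fun _ _ => erefl)).
    move=> /(_ (conj (inLs k0) (ex_intro _ _ (conj (ex_intro _ F0 (ex_intro _ k1 (And3 (conj F0I sepF0) k1p erefl))) sub0)))).
    by move=> [j jP H]; exists k0, j => //; rewrite -E.
  have [mp [[Qmp minmp] iff]] := @gen_least n (Ipos h) h c apos ex0.
  exists mp; split.
    split; first by case: Qmp => j jP H; exists j => //; rewrite E.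
    by move=> m' [j jP H]; apply: minmp; exists j => //; rewrite -E.
  move=> m; rewrite ess_iff //; rewrite -iff.
  by split => -[j jP H]; exists j => //; rewrite ?E // -E.
pose c := fun j => (l j)%:~R + gamma_t j.
have E : forall m j, (m * h j + l j)%:~R + gamma_t j = ((- m) * (- h j))%:~R + c j.
    by move=> m j; rewrite /c mulrNN intrD -addrA.
have apos : forall j, j \in Ineg h -> 0 < - h j by move=> j; rewrite inE oppr_gt0.
have ex0 : exists m0, exists2 j, j \in Ineg h & (m0 * - h j)%:~R + c j \is a Num.nat.
  have : exists m0 : int, (m0 * - h j0)%:~R + c j0 \is a Num.nat.
  apply: (@ex_nat_int (- h j0) (c j0)); first by move: j0n; rewrite inE oppr_gt0.
  + rewrite /c /gamma_t.
    have -> : (l j0)%:~R + (gamma j0 + theta * (h j0)%:~R) =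
      (l j0)%:~R + ((gamma j0 - q j0) + (q j0 + theta * (h j0)%:~R)) by ring.
    by rewrite rpredD ?intr_int // rpredD.
  move=> [m0 H]; exists m0, j0 => //.
have [mp [[Qmp minmp] iff]] := @gen_least n (Ineg h) (fun j => - h j) c apos ex0.
exists (- mp); split.
  split; first by case: Qmp => j jP H; exists j => //; rewrite E opprK.
  by move=> m' [j jP H]; rewrite lerNr; apply: minmp; exists j => //; rewrite -E.
move=> m; rewrite ess_iff //; last first.
  by move=> j jI; rewrite /gamma_t h0 // mulr0 addr0.
rewrite lerNr -iff.
by split => -[j jP H]; exists j => //; rewrite ?E // -E.
Qed.
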